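(* Let $\mathcal A=\{\ell_1,\dots,\ell_n\}$ be an arrangement of affine lines in $\mathbb C^2$ whose graph of double points $\Gamma$ is connected. Then the projectivization $\overline{\mathcal A}$ of the cone $c\mathcal A$ does not support any multinet structure, i.e. for no multiplicity function $m:\overline{\mathcal A}\to\mathbb Z_{>0}$ is there a multinet on $(\overline{\mathcal A},m)$.
   Context: The graph of double points $\Gamma$ of $\mathcal A$ has vertex set $\mathcal A$, with an edge $\{\ell_i,\ell_j\}$ iff $\ell_i\cap\ell_j$ is a point lying on no other line of $\mathcal A$. The cone $c\mathcal A$ is the central arrangement of $n+1$ planes in $\mathbb C^3$ consisting of the coordinate plane $z_0=0$ and the zero sets of the homogenizations (with respect to $z_0$) of the defining linear polynomials of the $\ell_i$. Its projectivization $\overline{\mathcal A}$ is the arrangement of $n+1$ lines in $\mathbb P^2$ (the projective closures of the $\ell_i$ and the line at infinity). A multinet on a multiarrangement $(\overline{\mathcal A},m)$ (Falk–Yuzvinsky) consists of a partition of $\overline{\mathcal A}$ into $k\ge 3$ nonempty classes $\overline{\mathcal A}_1,\dots,\overline{\mathcal A}_k$ and a set $\mathcal X$ of points of $\mathbb P^2$ such that: (i) $\sum_{\ell\in\overline{\mathcal A}_i}m(\ell)$ is independent of $i$; (ii) if $\ell\in\overline{\mathcal A}_i$, $\ell'\in\overline{\mathcal A}_j$ with $i\ne j$, then $\ell\cap\ell'\in\mathcal X$; (iii) for each $p\in\mathcal X$, $\sum_{\ell\in\overline{\mathcal A}_i,\,p\in\ell}m(\ell)$ is independent of $i$; (iv)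 for each $i$ and any $\ell,\ell'\in\overline{\mathcal A}_i$ there is a sequence $\ell=\ell_0,\ell_1,\dots,\ell_r=\ell'$ in $\overline{\mathcal A}_i$ with $\ell_{s-1}\cap\ell_s\notin\mathcal X$ for all $s$. *)

(* Defs.v *)
From HB Require Import structures.
From mathcomp Require Import all_boot all_order all_algebra.
From Stdlib Require Import Relations.
Set Implicit Arguments. Unset Strict Implicit. Unset Printing Implicit Defensive.
Import Order.TTheory GRing.Theory Num.Theory.
Local Open Scope ring_scope.

Definition v1 {R : Type} (u : R * R * R) := u.1.1.
Definition v2 {R : Type} (u : R * R * R) := u.1.2.
Definition v3 {R : Type} (u : R * R * R) := u.2.

Definition nonzero3 {R : numClosedFieldType} (u : R * R * R) : Prop :=
  u <> (0, 0, 0).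
Definition proportional3 {R : numClosedFieldType} (u w : R * R * R) : Prop :=
  exists c : R, c != 0 /\ w = (c * v1 u, c * v2 u, c * v3 u).

Definition on_affine {R : numClosedFieldType} (l : R * R * R) (x y : R) : bool :=
  v1 l * x + v2 l * y + v3 l == 0.

Definition affine_arrangement {R : numClosedFieldType} (n : nat)
  (A : 'I_n -> R * R * R) : Prop :=
  (forall i, (v1 (A i), v2 (A i)) <> (0, 0)) /\
  (forall i j, i != j -> ~ proportional3 (A i) (A j)).

Definition double_point_edge {R : numClosedFieldType} (n : nat)
  (A : 'I_n -> R * R * R) (i j : 'I_n) : Prop :=
  i <> j /\
  exists x y : R, on_affine (A i) x y /\ on_affine (A j) x y /\
    forall k, k <> i -> k <> j -> ~~ on_affine (A k) x y.

Definition double_point_graph_connected {R : numClosedFieldType} (n : nat)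
  (A : 'I_n -> R * R * R) : Prop :=
  forall i j : 'I_n, clos_refl_trans _ (double_point_edge A) i j.

(* Projectivized cone: lines in P^2 with homogeneous coordinates (z0, z1, z2).
   The homogenization of a x + b y + c is c z0 + a z1 + b z2, i.e. the covector
   (c, a, b); the line at infinity z0 = 0 is the covector (1, 0, 0) and is
   given index ord_max. *)
Definition proj_cone {R : numClosedFieldType} (n : nat)
  (A : 'I_n -> R * R * R) (i : 'I_n.+1) : R * R * R :=
  match unlift ord_max i with
  | Some j => (v3 (A j), v1 (A j), v2 (A j))
  | None => (1, 0, 0)
  end.

Definition on_proj {R : numClosedFieldType} (L p : R * R * R) : bool :=
  v1 L * v1 p + v2 L * v2 p + v3 L * v3 p == 0.

(* The intersection point of L and L' belongs to X (X is a set of points of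
   P^2, given by a predicate on representatives). *)
Definition meet_in {R : numClosedFieldType} (X : R * R * R -> Prop)
  (L L' : R * R * R) : Prop :=
  exists p, X p /\ nonzero3 p /\ on_proj L p /\ on_proj L' p.

Definition is_multinet {R : numClosedFieldType} (N : nat)
  (L : 'I_N -> R * R * R) (m : 'I_N -> nat)
  (k : nat) (cls : 'I_N -> 'I_k) (X : R * R * R -> Prop) : Prop :=
  (3 <= k)%N /\
  (forall c : 'I_k, exists l, cls l = c) /\
  [/\
      (forall c c' : 'I_k,
         (\sum_(l | cls l == c) m l = \sum_(l | cls l == c') m l)%N),
      (forall l l', cls l <> cls l' -> meet_in X (L l) (L l')),
      (forall p, X p -> nonzero3 p -> forall c c' : 'I_k,
         (\sum_(l | (cls l == c) && on_proj (L l) p) m l =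
          \sum_(l | (cls l == c') && on_proj (L l) p) m l)%N) &
      (forall l l', cls l = cls l' ->
         clos_refl_trans _
           (fun a b => cls a = cls l /\ cls b = cls l /\ ~ meet_in X (L a) (L b))
           l l')].

Definition supports_multinet {R : numClosedFieldType} (N : nat)
  (L : 'I_N -> R * R * R) : Prop :=
  exists (m : 'I_N -> nat), (forall l, (0 < m l)%N) /\
  exists k (cls : 'I_N -> 'I_k) (X : R * R * R -> Prop), is_multinet L m cls X.

(* Main.v *)
Require Import Defs.
From HB Require Import structures.
From mathcomp Require Import all_boot all_order all_algebra.
From Stdlib Require Import Relations.
From mathcomp Require Import ring zify.
Set Implicit Arguments. Unset Strict Implicit. Unset Printing Implicit Defensive.
Import Order.TTheory GRing.Theory Num.Theory.
Local Open Scope ring_scope.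

Lemma prop_ab (R : fieldType) (ai bi aj bj d1 d2 : R) :
  (ai, bi) <> (0, 0) -> (aj, bj) <> (0, 0) -> (d1, d2) <> (0, 0) ->
  ai * d1 + bi * d2 = 0 -> aj * d1 + bj * d2 = 0 ->
  exists t, t != 0 /\ aj = t * ai /\ bj = t * bi.
Proof.
move=> hi hj hd ei ej.
case: (eqVneq d1 0) => [d10|d1n0].
  subst d1.
  have d2n0 : d2 != 0 by apply/eqP => e; apply: hd; rewrite e.
  move: ei ej; rewrite !mulr0 !add0r => /eqP; rewrite mulf_eq0 (negbTE d2n0) orbF => /eqP bi0.
  move/eqP; rewrite mulf_eq0 (negbTE d2n0) orbF => /eqP bj0.
  subst bi bj.
  have ai0 : ai != 0 by apply/eqP => e; apply: hi; rewrite e.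
  have aj0 : aj != 0 by apply/eqP => e; apply: hj; rewrite e.
  exists (aj / ai); split; first by rewrite mulf_neq0 ?invr_eq0.
  by rewrite divfK // mulr0.
have bi0 : bi != 0.
  apply/eqP => e; subst bi; apply: hi; move: ei; rewrite mul0r addr0 => /eqP.
  by rewrite mulf_eq0 (negbTE d1n0) orbF => /eqP ->.
have bj0 : bj != 0.
  apply/eqP => e; subst bj; apply: hj; move: ej; rewrite mul0r addr0 => /eqP.
  by rewrite mulf_eq0 (negbTE d1n0) orbF => /eqP ->.
exists (bj / bi); split; first by rewrite mulf_neq0 ?invr_eq0.
split; last by rewrite divfK.
have E1 : ai * d1 = - (bi * d2) by apply/eqP; rewrite -addr_eq0 ei.
have E2 : aj * d1 = - (bj * d2) by apply/eqP; rewrite -addr_eq0 ej.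
apply: (mulIf d1n0); rewrite -[_ * ai * d1]mulrA E1 E2.
rewrite mulrN mulrA divfK //.
Qed.

Lemma alg (R : numClosedFieldType) (u w : R * R * R) (x y : R) (p : R * R * R) :
  (v1 u, v2 u) <> (0, 0) -> (v1 w, v2 w) <> (0, 0) -> ~ proportional3 u w ->
  on_affine u x y -> on_affine w x y -> nonzero3 p ->
  on_proj (v3 u, v1 u, v2 u) p -> on_proj (v3 w, v1 w, v2 w) p ->
  v1 p != 0 /\ v2 p = x * v1 p /\ v3 p = y * v1 p.
Proof.
case: u => [[ai bi] ci]; case: w => [[aj bj] cj]; case: p => [[p0 p1] p2].
rewrite /on_affine /on_proj /v1 /v2 /v3 /nonzero3 /proportional3 /=.
move=> hi hj hnp /eqP ei /eqP ej hp /eqP pi /eqP pj.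
have ec : ci = -(ai * x + bi * y) by apply/eqP; rewrite -addr_eq0 addrC ei.
have ecj : cj = -(aj * x + bj * y) by apply/eqP; rewrite -addr_eq0 addrC ej.
subst ci cj.
have key : forall d1 d2, (d1, d2) <> (0, 0) ->
    ai * d1 + bi * d2 = 0 -> aj * d1 + bj * d2 = 0 -> False.
  move=> d1 d2 hd e1 e2.
  have [t [t0 [ea eb]]] := prop_ab hi hj hd e1 e2.
  apply: hnp; exists t; split => //; rewrite ea eb; congr (_, _, _); ring.
case: (eqVneq p0 0) => [p00|p0n0].
  subst p0; exfalso; apply: (key p1 p2).
  - by move=> [e1 e2]; apply: hp; rewrite e1 e2.
  - by rewrite -pi; ring.
  - by rewrite -pj; ring.
split => //.
have E1 : ai * (p1 - x * p0) + bi * (p2 - y * p0) = 0 by rewrite -pi; ring.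
have E2 : aj * (p1 - x * p0) + bj * (p2 - y * p0) = 0 by rewrite -pj; ring.
case: (eqVneq (p1 - x * p0) 0) => [d1|d1]; last by exfalso; apply: (key _ _ _ E1 E2) => -[e _]; move/eqP: d1.
case: (eqVneq (p2 - y * p0) 0) => [d2|d2]; last by exfalso; apply: (key _ _ _ E1 E2) => -[_ e]; move/eqP: d2.
by move/eqP: d1; rewrite subr_eq0 => /eqP ->; move/eqP: d2; rewrite subr_eq0 => /eqP ->.
Qed.

Lemma onp_aff (R : numClosedFieldType) (u : R * R * R) (x y : R) (p : R * R * R) :
  v1 p != 0 -> v2 p = x * v1 p -> v3 p = y * v1 p ->
  on_proj (v3 u, v1 u, v2 u) p = on_affine u x y.
Proof.
case: u => [[a b] c]; case: p => [[p0 p1] p2].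
rewrite /on_affine /on_proj /v1 /v2 /v3 /= => p0n0 -> ->.
have -> : c * p0 + a * (x * p0) + b * (y * p0) = (a * x + b * y + c) * p0 by ring.
by rewrite mulf_eq0 (negbTE p0n0) orbF.
Qed.

Lemma pc_lift (R : numClosedFieldType) n (A : 'I_n -> R * R * R) j :
  proj_cone A (lift ord_max j) = (v3 (A j), v1 (A j), v2 (A j)).
Proof. by rewrite /proj_cone liftK. Qed.

Lemma pc_max (R : numClosedFieldType) n (A : 'I_n -> R * R * R) :
  proj_cone A ord_max = (1, 0, 0).
Proof. by rewrite /proj_cone unlift_none. Qed.

Theorem theorem3p1 (R : numClosedFieldType) (n : nat) (A : 'I_n -> R * R * R) :
  affine_arrangement A ->
  double_point_graph_connected A ->
  ~ supports_multinet (proj_cone A).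
Proof.
move=> [Hab Hnp] Hconn [m [mpos [k [cls [X [k3 [Hne [Hi Hii Hiii Hiv]]]]]]]].
have edge_same : forall i j, double_point_edge A i j ->
    cls (lift ord_max i) = cls (lift ord_max j).
  move=> i j [ij [x [y [oi [oj ok]]]]].
  apply/eqP; apply: contraT => /eqP hne.
  have [p [Xp [nzp [pi pj]]]] := Hii _ _ hne.
  rewrite !pc_lift in pi pj.
  have ijb : i != j by apply/eqP.
  have [p0 [e1 e2]] := alg (Hab i) (Hab j) (Hnp i j ijb) oi oj nzp pi pj.
  have only2 : forall l, on_proj (proj_cone A l) p ->
      l = lift ord_max i \/ l = lift ord_max j.
    move=> l; case: (unliftP ord_max l) => [k' ->|->].
      rewrite pc_lift (onp_aff _ p0 e1 e2) => hk.
      case: (eqVneq k' i) => [->|ki]; first by left.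
      case: (eqVneq k' j) => [->|kj]; first by right.
      by have := ok k' (elimN eqP ki) (elimN eqP kj); rewrite hk.
    rewrite pc_max /on_proj /v1 /v2 /v3 /= mul1r !mul0r !addr0 => h.
    by move: p0; rewrite h.
  have [c'' hc] : exists c'', c'' \notin [set cls (lift ord_max i); cls (lift ord_max j)].
    have := cardsC [set cls (lift ord_max i); cls (lift ord_max j)].
    rewrite cards2 card_ord => h.
    have : (0 < #|~: [set cls (lift ord_max i); cls (lift ord_max j)]|)%N.
      by move: h; case: (_ != _) => /=; lia.
    by case/card_gt0P => c; rewrite in_setC => hc; exists c.
  have := Hiii p Xp nzp (cls (lift ord_max i)) c''.
  rewrite (bigD1 (lift ord_max i)) /=; last by rewrite eqxx pc_lift pi.
  rewrite [X in _ = X]big1; last first.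
    move=> l /andP[/eqP cl op]; exfalso.
    case: (only2 l op) => el; move: hc; rewrite -cl el in_set2 eqxx ?orbT //.
  move/eqP; rewrite addn_eq0 => /andP[/eqP h _].
  by have := mpos (lift ord_max i); rewrite h.
have all_same : forall i j, cls (lift ord_max i) = cls (lift ord_max j).
  move=> i j; elim: (Hconn i j) => [a b e|a|a b c _ e1 _ e2].
  - exact: edge_same.
  - by [].
  - by rewrite e1.
have nm : forall l l', l != ord_max -> l' != ord_max -> cls l = cls l'.
  move=> l l'; case: (unliftP ord_max l) => [a ->|->]; last by rewrite eqxx.
  case: (unliftP ord_max l') => [b ->|->]; last by rewrite eqxx.
  by move=> _ _; apply: all_same.
have [l0 h0] := Hne (Ordinal (leq_trans (isT : (0 < 3)%N) k3)).
have [l1 h1] := Hne (Ordinal (leq_trans (isT : (1 < 3)%N) k3)).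
have [l2 h2] := Hne (Ordinal (leq_trans (isT : (2 < 3)%N) k3)).
have d01 : cls l0 <> cls l1 by rewrite h0 h1.
have d02 : cls l0 <> cls l2 by rewrite h0 h2.
have d12 : cls l1 <> cls l2 by rewrite h1 h2.
case: (eqVneq l0 ord_max) => [e0|n0].
  have n1 : l1 != ord_max by apply/eqP => e; apply: d01; rewrite e0 e.
  have n2 : l2 != ord_max by apply/eqP => e; apply: d02; rewrite e0 e.
  exact: d12 (nm _ _ n1 n2).
case: (eqVneq l1 ord_max) => [e1|n1].
  have n2 : l2 != ord_max by apply/eqP => e; apply: d12; rewrite e1 e.
  exact: d02 (nm _ _ n0 n2).
exact: d01 (nm _ _ n0 n1).
Qed.
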